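(* Let $(X,d)$ and $(Y,d')$ be separable metric spaces with computable structures $\mathcal I$ and $\mathcal J$, and let $T:X\to X$, $T':Y\to Y$ be continuous maps. Let $f:X\to Y$ be surjective and a morphism from $(X,d,\mathcal I)$ to $(Y,d',\mathcal J)$ with $f\circ T=T'\circ f$. Then for every $x\in X$, with $y=f(x)$, $I\in\mathcal I$, $J\in\mathcal J$, $$\mathcal E^I(x)\ge\mathcal E^J(y),$$ where the left side is the orbit complexity of $x$ under $T$ and the right side that of $y$ under $T'$.
   Context: $\Sigma=\{0,1\}^*$; a universal Turing machine $\mathcal U$ is fixed (partial recursive $\Sigma\to\Sigma$). An interpretation $I:\Sigma\to X$ has dense image; computable if there is a total recursive $D$ with $|d(I(s_1),I(s_2))-D(s_1,s_2,n)|\le2^{-n}$; two computable interpretations are equivalent if there is a total recursive $D^*$ with $|d(I_1(s_1),I_2(s_2))-D^*(s_1,s_2,n)|\le2^{-n}$; a computable structure is an equivalence class. A morphism $\Psi:(X,d,\mathcal I)\to(Y,d',\mathcal J)$ is a uniformly continuous map such that for every $I\in\mathcal I$, $J\in\mathcal J$ there is a total recursive $D^*:\Sigma\times\Sigma\times\mathbb N\to\mathbb Q$ with $|d'(\Psi(I(s_1)),J(s_2))-D^*(s_1,s_2,n)|\le2^{-n}$. Fix a total recursive surjection $\mathcal Q:\Sigma\to\Sigma^*$ onto finite sequences of strings; $U(p)=I(\mathcal Q(\mathcal U(p)))$, $i$-th entry $U_i(p)$. For a map $T$: $\mathcal E^I(x,n,\epsilon)=\min\{|p|: U(p)\in X^{n+1},\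 \max_{0\le i\le n}d(U_i(p),T^i(x))<\epsilon\}$. Hyperreals: $\mathbb R^*$ an ordered field containing $\mathbb R$ with a surjective ring homomorphism $J:\mathbb R^{\mathbb N}\to\mathbb R^*$ such that if $a\in\mathbb R$ and $\exists k\ge1$ with $\phi_{kn}\ge a$ for all $n\ge1$ then $J(\phi)\ge a$; for nonzero $a,b$, $a\simeq b$ iff $a/b,b/a$ bounded; $[a]$ the class; $[a]\le[b]$ iff for all $x\in[a],y\in[b]$, $x\simeq y$ or $x<y$. $\mathcal R$: $\approx$-classes of monotone sequences in $\mathbb R^*/{\simeq}$ ($(a_i)<(b_j)$ iff $\exists M$ with $a_n<b_m$ for all $n,m>M$; $\approx$ iff neither $<$), totally ordered, containing $\mathbb R^*/{\simeq}$ as constant sequences, with sups/infs of monotone sequences. $\mathcal E^I(x,\epsilon)=[J((\mathcal E^I(x,n,\epsilon))_n)]$, $\mathcal E^I(x)=\sup_{\epsilon>0}\mathcal E^I(x,\epsilon)$. *)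

(* Defs.v *)
From HB Require Import structures.
From mathcomp Require Import all_boot all_order all_algebra.
From mathcomp Require Import boolp classical_sets reals.
Set Implicit Arguments.
Unset Strict Implicit.
Unset Printing Implicit Defensive.
Import Order.TTheory GRing.Theory Num.Theory.

Inductive code : Type :=
| CZero
| CSucc
| CProj of nat
| CComp of code & list code
| CPrec of code & code
| CMu of code.

Inductive ev : code -> seq nat -> nat -> Prop :=
| evZero v : ev CZero v 0
| evSucc x v : ev CSucc (x :: v) x.+1
| evProj i v : (i < size v)%N -> ev (CProj i) v (nth 0%N v i)
| evComp f gs v ws y : evs gs v ws -> ev f ws y -> ev (CComp f gs) v y
| evPrec0 f g v y : ev f v y -> ev (CPrec f g) (0%N :: v) y
| evPrecS f g n v r y :
    ev (CPrec f g) (n :: v) r -> ev g (n :: r :: v) y ->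
    ev (CPrec f g) (n.+1 :: v) y
| evMu f v n :
    ev f (n :: v) 0 ->
    (forall m, (m < n)%N -> exists k, ev f (m :: v) k.+1) ->
    ev (CMu f) v n
with evs : list code -> seq nat -> seq nat -> Prop :=
| evsNil v : evs [::] v [::]
| evsCons g gs v w ws : ev g v w -> evs gs v ws -> evs (g :: gs) v (w :: ws).

(* Sigma = {0,1}^* is  seq bool ; bijective coding of Sigma into nat *)
Definition Sigma := seq bool.

Fixpoint enc_bits (s : Sigma) : nat :=
  match s with
  | [::] => 0%N
  | b :: s' => ((enc_bits s').*2 + 1 + b)%N
  end.

(* Cantor pairing and a bijective coding of finite sequences of nat *)
Definition cpair (a b : nat) : nat := (((a + b) * (a + b).+1)./2 + b)%N.

Fixpoint enc_list (l : seq nat) : nat :=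
  match l with
  | [::] => 0%N
  | a :: l' => (cpair a (enc_list l')).+1
  end.

Definition enc_seqs (l : seq Sigma) : nat := enc_list (map enc_bits l).

(* zig-zag decoding nat -> int *)
Definition int_of_nat (a : nat) : int :=
  if odd a then (- ((a.+1)./2)%:Z)%R else ((a./2)%:Z)%R.

Definition partrec (phi : Sigma -> option Sigma) : Prop :=
  exists c : code, forall s t : Sigma,
    phi s = Some t <-> ev c [:: enc_bits s] (enc_bits t).

Definition totrec_seqs (F : Sigma -> seq Sigma) : Prop :=
  exists c : code, forall s : Sigma, ev c [:: enc_bits s] (enc_seqs (F s)).

Definition totrec3 (D : Sigma -> Sigma -> nat -> rat) : Prop :=
  exists cn cd : code, forall (s1 s2 : Sigma) (n : nat),
    exists a b : nat,
      ev cn [:: enc_bits s1; enc_bits s2; n] a /\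
      ev cd [:: enc_bits s1; enc_bits s2; n] b /\
      D s1 s2 n = ((int_of_nat a)%:~R / (b.+1)%:R)%R.

Definition universal_machine (UU : Sigma -> option Sigma) : Prop :=
  partrec UU /\
  forall phi, partrec phi ->
    exists c : nat, forall p s, phi p = Some s ->
      exists p', UU p' = Some s /\ (size p' <= c * size p + c)%N.

Local Open Scope ring_scope.

Section Metric.
Variable R : realType.

Definition is_metric (X : Type) (d : X -> X -> R) : Prop :=
  [/\ forall x y, d x y = 0 <-> x = y,
      forall x y, d x y = d y x &
      forall x y z, d x z <= d x y + d y z].

Definition separable (X : Type) (d : X -> X -> R) : Prop :=
  exists S : nat -> X, forall x (e : R), 0 < e -> exists k, d (S k) x < e.

Definition metric_continuous (X : Type) (d : X -> X -> R) (T : X -> X) :=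
  forall x (e : R), 0 < e -> exists2 del : R, 0 < del &
    forall y, d x y < del -> d (T x) (T y) < e.

Definition unif_continuous (X Y : Type) (d : X -> X -> R) (d' : Y -> Y -> R)
  (f : X -> Y) :=
  forall e : R, 0 < e -> exists2 del : R, 0 < del &
    forall x y, d x y < del -> d' (f x) (f y) < e.

Definition interpretation (X : Type) (d : X -> X -> R) (I : Sigma -> X) :=
  forall x (e : R), 0 < e -> exists s, d (I s) x < e.

Definition comp_interp (X : Type) (d : X -> X -> R) (I : Sigma -> X) :=
  interpretation d I /\
  exists D, totrec3 D /\ forall s1 s2 n,
    `|d (I s1) (I s2) - ratr (D s1 s2 n)| <= 2%:R ^- n.

Definition equiv_interp (X : Type) (d : X -> X -> R) (I1 I2 : Sigma -> X) :=
  exists D, totrec3 D /\ forall s1 s2 n,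
    `|d (I1 s1) (I2 s2) - ratr (D s1 s2 n)| <= 2%:R ^- n.

(* a computable structure = an equivalence class of computable
   interpretations, given as a predicate on interpretations *)
Definition comp_structure (X : Type) (d : X -> X -> R)
  (CI : (Sigma -> X) -> Prop) : Prop :=
  [/\ exists I, CI I,
      forall I, CI I -> comp_interp d I,
      forall I1 I2, CI I1 -> CI I2 -> equiv_interp d I1 I2 &
      forall I1 I2, CI I1 -> comp_interp d I2 -> equiv_interp d I1 I2 -> CI I2].

Definition morphism (X Y : Type) (d : X -> X -> R) (d' : Y -> Y -> R)
  (CI : (Sigma -> X) -> Prop) (CJ : (Sigma -> Y) -> Prop) (f : X -> Y) :=
  unif_continuous d d' f /\
  forall I J, CI I -> CJ J ->
    exists D, totrec3 D /\ forall s1 s2 n,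
      `|d' (f (I s1)) (J s2) - ratr (D s1 s2 n)| <= 2%:R ^- n.

Definition orbit_prog (X : Type) (d : X -> X -> R) (UU : Sigma -> option Sigma)
  (Q : Sigma -> seq Sigma) (I : Sigma -> X) (T : X -> X) (x : X)
  (n : nat) (eps : R) (p : Sigma) : Prop :=
  exists s, UU p = Some s /\ size (Q s) = n.+1 /\
    forall i, (i <= n)%N -> d (I (nth [::] (Q s) i)) (iter i T x) < eps.

Definition orbit_cx (X : Type) (d : X -> X -> R) (UU : Sigma -> option Sigma)
  (Q : Sigma -> seq Sigma) (I : Sigma -> X) (T : X -> X) (x : X)
  (n : nat) (eps : R) : nat :=
  xget 0%N (fun m : nat =>
    (exists p, orbit_prog d UU Q I T x n eps p /\ size p = m) /\
    forall p, orbit_prog d UU Q I T x n eps p -> (m <= size p)%N).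

Definition hyperreal (Rs : realFieldType) (J : (nat -> R) -> Rs) : Prop :=
  [/\ forall phi psi, J (fun n => phi n + psi n) = J phi + J psi,
      forall phi psi, J (fun n => phi n * psi n) = J phi * J psi,
      J (fun _ => 1) = 1,
      forall y, exists phi, J phi = y &
      forall (a : R) (phi : nat -> R),
        (exists k, (1 <= k)%N /\ forall n, (1 <= n)%N -> a <= phi (k * n)%N) ->
        J (fun _ => a) <= J phi].

Section Hyper.
Variables (Rs : realFieldType) (J : (nat -> R) -> Rs).

Definition hbounded (z : Rs) : Prop := exists r : R, `|z| <= J (fun _ => r).

Definition hsim (a b : Rs) : Prop :=
  [/\ a != 0, b != 0, hbounded (a / b) & hbounded (b / a)].

Definition cls_le (a b : Rs) : Prop :=
  forall x y, hsim x a -> hsim y b -> hsim x y \/ x < y.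
Definition cls_lt (a b : Rs) : Prop := cls_le a b /\ ~ hsim a b.

(* order of R-calligraphic on (representatives of) monotone sequences *)
Definition rseq_lt (a b : nat -> Rs) : Prop :=
  exists M, forall n m, (M < n)%N -> (M < m)%N -> cls_lt (a n) (b m).

Definition rseq_ge (a b : nat -> Rs) : Prop :=
  rseq_lt b a \/ (~ rseq_lt a b /\ ~ rseq_lt b a).

Definition orbit_cx_eps (X : Type) (d : X -> X -> R)
  (UU : Sigma -> option Sigma) (Q : Sigma -> seq Sigma) (I : Sigma -> X)
  (T : X -> X) (x : X) (eps : R) : Rs :=
  J (fun n => (orbit_cx d UU Q I T x n eps)%:R).

(* E^I(x) = sup_{eps>0} E^I(x,eps): since eps |-> E^I(x,eps) is monotone,
   it is the element of R-calligraphic given by the monotone sequence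
   k |-> E^I(x, 1/(k+1)) *)
Definition orbit_cx_seq (X : Type) (d : X -> X -> R)
  (UU : Sigma -> option Sigma) (Q : Sigma -> seq Sigma) (I : Sigma -> X)
  (T : X -> X) (x : X) : nat -> Rs :=
  fun k => orbit_cx_eps d UU Q I T x ((k.+1)%:R)^-1.

End Hyper.
End Metric.

(* Main.v *)
Require Import Defs.
From HB Require Import structures.
From mathcomp Require Import all_boot all_order all_algebra.
From mathcomp Require Import boolp classical_sets reals.
From mathcomp Require Import zify ring lra.

Fixpoint ev_det c v y1 (H1 : ev c v y1) {struct H1} : forall y2, ev c v y2 -> y1 = y2
with evs_det gs v w1 (H1 : evs gs v w1) {struct H1} : forall w2, evs gs v w2 -> w1 = w2.
Proof.
- destruct H1 as [v|x v|i v Hi|f gs v ws y Hs Hf|f g v y Hf|f g n v r y Hr Hg|f v n Hf Hlt];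
   intros y2 H2; inversion H2; subst; auto.
  + match goal with H : evs gs v ?w |- _ => have E := evs_det _ _ _ Hs _ H end. subst.
    match goal with H : ev f _ y2 |- _ => exact: ev_det _ _ _ Hf _ H end.
  + match goal with H : ev f _ y2 |- _ => exact: ev_det _ _ _ Hf _ H end.
  + match goal with H : ev (CPrec f g) _ ?w |- _ => have E := ev_det _ _ _ Hr _ H end. subst.
    match goal with H : ev g _ y2 |- _ => exact: ev_det _ _ _ Hg _ H end.
  + match goal with H : ev f _ 0 , H' : forall m, _ |- _ => rename H into Hf2; rename H' into Hlt2 end.
    case: (ltngtP n y2) => // hlt.
    * case: (Hlt2 _ hlt) => k Hk. have := ev_det _ _ _ Hf _ Hk. by [].
    * case: (Hlt _ hlt) => k Hk. have := ev_det _ _ _ Hk _ Hf2. by [].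
- destruct H1 as [v|g gs v w ws Hg Hs]; intros w2 H2; inversion H2; subst; auto.
  match goal with H : ev g v _ |- _ => have E1 := ev_det _ _ _ Hg _ H end.
  match goal with H : evs gs v _ |- _ => have E2 := evs_det _ _ _ Hs _ H end. by subst.
Qed.

Set Implicit Arguments.
Unset Strict Implicit.
Unset Printing Implicit Defensive.

Definition ar (v : seq nat) i := nth 0%N v i.

Definition cmp k (F : seq nat -> nat) :=
  exists c, forall v, size v = k -> ev c v (F v).

Lemma cmp_ext k F G : cmp k F -> (forall v, size v = k -> F v = G v) -> cmp k G.
Proof. by case=> c Hc HFG; exists c => v Hv; rewrite -HFG //; apply: Hc. Qed.

Lemma cmp_zero k : cmp k (fun _ => 0%N).
Proof. by exists CZero => v _; constructor. Qed.

Lemma cmp_proj k i : (i < k)%N -> cmp k (fun v => ar v i).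
Proof. by move=> hi; exists (CProj i) => v Hv; constructor; rewrite Hv. Qed.

Fixpoint allcmp k (Gs : seq (seq nat -> nat)) : Prop :=
  match Gs with [::] => True | G :: Gs' => cmp k G /\ allcmp k Gs' end.

Lemma allcmp_codes k Gs : allcmp k Gs ->
  exists cs, forall v, size v = k -> evs cs v (map (fun G => G v) Gs).
Proof.
elim: Gs => [|G Gs IH] /=; first by exists [::] => v _; constructor.
case=> [[c Hc] /IH [cs Hcs]]; exists (c :: cs) => v Hv; constructor; auto.
Qed.

Lemma cmp_comp k m F Gs : cmp m F -> size Gs = m -> allcmp k Gs ->
  cmp k (fun v => F (map (fun G => G v) Gs)).
Proof.
case=> c Hc Hs /allcmp_codes [cs Hcs]; exists (CComp c cs) => v Hv.
econstructor; first exact: Hcs. by apply: Hc; rewrite size_map.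
Qed.

Definition C1 f := cmp 1 (fun v => f (ar v 0)).
Definition C2 f := cmp 2 (fun v => f (ar v 0) (ar v 1)).
Definition C3 f := cmp 3 (fun v => f (ar v 0) (ar v 1) (ar v 2)).

Lemma app1 k f G : C1 f -> cmp k G -> cmp k (fun v => f (G v)).
Proof. move=> Hf HG. exact: (cmp_comp (Gs := [:: G]) Hf). Qed.
Lemma app2 k f G1 G2 : C2 f -> cmp k G1 -> cmp k G2 -> cmp k (fun v => f (G1 v) (G2 v)).
Proof. move=> Hf H1 H2. exact: (cmp_comp (Gs := [:: G1; G2]) Hf). Qed.
Lemma app3 k f G1 G2 G3 : C3 f -> cmp k G1 -> cmp k G2 -> cmp k G3 ->
  cmp k (fun v => f (G1 v) (G2 v) (G3 v)).
Proof. move=> Hf H1 H2 H3. exact: (cmp_comp (Gs := [:: G1; G2; G3]) Hf). Qed.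

Lemma C1_succ : C1 S.
Proof. by exists CSucc => [[|x v]] //= _; constructor. Qed.

Lemma cmp_const k c : cmp k (fun _ => c).
Proof. elim: c => [|c IH]; [exact: cmp_zero | exact: (app1 C1_succ IH)]. Qed.

Definition prf2 (b : nat -> nat) (s : nat -> nat -> nat -> nat) n x :=
  nat_rect (fun _ => nat) (b x) (fun i r => s i r x) n.

Lemma C_prec b s : C1 b -> C3 s -> C2 (prf2 b s).
Proof.
case=> cb Hb [cs Hs]; exists (CPrec cb cs) => [[|n [|x [|? ?]]]] //= _.
rewrite /ar /=. elim: n => [|n IH] /=.
  by constructor; apply: (Hb [:: x]).
by econstructor; [exact: IH | apply: (Hs [:: n; _; x])].
Qed.

Definition minz (g : nat -> nat) : nat :=
  xget 0%N (fun n => g n = 0%N /\ forall m, (m < n)%N -> g m <> 0%N).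

Lemma minzP g : (exists n, g n = 0%N) ->
  g (minz g) = 0%N /\ forall m, (m < minz g)%N -> g m <> 0%N.
Proof.
move=> [n Hn]. apply: (xgetPex 0%N (P := fun n => g n = 0%N /\ forall m, (m < n)%N -> g m <> 0%N)).
have ex : exists n, g n == 0%N by exists n; apply/eqP.
exists (ex_minn ex); case: ex_minnP => m /eqP Hm Hmin; split => // k hk /eqP hk0.
by have := Hmin _ hk0; rewrite leqNgt hk.
Qed.

Lemma C_mu t : C2 t -> (forall x, exists n, t n x = 0%N) ->
  C1 (fun x => minz (fun n => t n x)).
Proof.
case=> c Hc Hex; exists (CMu c) => [[|x [|? ?]]] //= _; rewrite /ar /=.
have [H0 Hlt] := minzP (Hex x).
constructor; first by rewrite -H0; apply: (Hc [:: _; x]).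
move=> m hm; have := Hlt m hm; case E: (t m x) => [//|k] _.
exists k; rewrite -E; exact: (Hc [:: m; x]).
Qed.

Lemma C1_id : C1 (fun x => x).
Proof. exact: cmp_proj. Qed.

Lemma p0 k : (0 < k.+1)%N. Proof. by []. Qed.
Lemma p1 k : (1 < k.+2)%N. Proof. by []. Qed.
Lemma p2 k : (2 < k.+3)%N. Proof. by []. Qed.
Definition P0 k := cmp_proj (p0 k).
Definition P1 k := cmp_proj (p1 k).
Definition P2 k := cmp_proj (p2 k).

Lemma C2_ext f g : C2 f -> (forall x y, f x y = g x y) -> C2 g.
Proof. by move=> H E; apply: cmp_ext H _ => v _; rewrite E. Qed.
Lemma C1_ext f g : C1 f -> (forall x, f x = g x) -> C1 g.
Proof. by move=> H E; apply: cmp_ext H _ => v _; rewrite E. Qed.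

Lemma C2_addr : C2 (fun n x => n + x)%N.
Proof.
apply: C2_ext (C_prec (s := fun i r x => r.+1) C1_id _) _.
  exact: app1 C1_succ (P1 _).
by move=> n x; elim: n => //= n ->.
Qed.
Lemma C2_add : C2 addn.
Proof. exact: C2_addr. Qed.

Lemma C2_mul : C2 muln.
Proof.
apply: C2_ext (C_prec (b := fun _ => 0%N) (s := fun i r x => r + x)%N (cmp_const _ _) _) _.
  exact: app2 C2_add (P1 _) (P2 _).
by move=> n x; elim: n => //= n ->; rewrite mulSn addnC.
Qed.

Lemma C1_of2 f : C2 f -> forall c, C1 (fun x => f x c).
Proof. move=> H c; exact: app2 H (P0 _) (cmp_const _ _). Qed.

Lemma C1_pred : C1 predn.
Proof.
have H : C2 (prf2 (fun _ => 0%N) (fun i r x => i)).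
  apply: C_prec; [exact: cmp_const | exact: P0].
apply: C1_ext (C1_of2 H 0%N) _. by case.
Qed.

Lemma C2_subr : C2 (fun n x => x - n)%N.
Proof.
apply: C2_ext (C_prec (b := fun x => x) (s := fun i r x => r.-1) C1_id _) _.
  exact: app1 C1_pred (P1 _).
by move=> n x; elim: n => [|n /= ->]; [rewrite subn0 | rewrite subnS].
Qed.

Lemma C2_sub : C2 subn.
Proof. exact: app2 C2_subr (P1 _) (P0 _). Qed.

Lemma C1_odd : C1 (fun n => nat_of_bool (odd n)).
Proof.
have H : C2 (prf2 (fun _ => 0%N) (fun i r x => 1 - r)%N).
  apply: C_prec; [exact: cmp_const | exact: app2 C2_sub (cmp_const _ _) (P1 _)].
apply: C1_ext (C1_of2 H 0%N) _. elim=> //= n ->. by case: (odd n).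
Qed.

Lemma C1_half : C1 half.
Proof.
have H : C2 (prf2 (fun _ => 0%N) (fun i r x => r + odd i)%N).
  apply: C_prec; [exact: cmp_const | exact: app2 C2_add (P1 _) (app1 C1_odd (P0 _))].
apply: C1_ext (C1_of2 H 0%N) _. elim=> //= n ->. by rewrite uphalf_half addnC.
Qed.

Definition tri w := (w * w.+1)./2.
Lemma C1_tri : C1 tri.
Proof. exact: app1 C1_half (app2 C2_mul (P0 _) (app1 C1_succ (P0 _))). Qed.

Lemma C2_cpair : C2 cpair.
Proof.
apply: app2 C2_add _ (P1 _).
exact: app1 C1_tri (app2 C2_add (P0 _) (P1 _)).
Qed.

Lemma triS w : tri w.+1 = (tri w + w.+1)%N.
Proof.
rewrite /tri.
have -> : (w.+1 * w.+2 = w * w.+1 + (w.+1).*2)%N by rewrite -mul2n; lia.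
by rewrite halfD odd_double andbF add0n doubleK.
Qed.

Lemma tri_mono a b : (a <= b)%N -> (tri a <= tri b)%N.
Proof. elim: b => [|b IH]; first by rewrite leqn0 => /eqP ->.
rewrite leq_eqVlt => /orP [/eqP -> //|]; rewrite ltnS => /IH; rewrite triS; lia.
Qed.

Lemma tri_ge w : (w <= tri w)%N.
Proof. elim: w => // w IH; rewrite triS; lia. Qed.

Definition Wt w z := (1 - (tri w.+1 - z))%N.
Definition W z := minz (fun w => Wt w z).
Definition sndp z := (z - tri (W z))%N.
Definition fstp z := (W z - sndp z)%N.

Lemma W_ex z : exists w, Wt w z = 0%N.
Proof. exists z; rewrite /Wt; have := tri_ge z.+1; lia. Qed.

Lemma C1_W : C1 W.
Proof.
apply: C_mu W_ex. apply: app2 C2_sub (cmp_const _ _) _.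
exact: app2 C2_sub (app1 C1_tri (app1 C1_succ (P0 _))) (P1 _).
Qed.
Lemma C1_sndp : C1 sndp.
Proof. exact: app2 C2_sub (P0 _) (app1 C1_tri (app1 C1_W (P0 _))). Qed.
Lemma C1_fstp : C1 fstp.
Proof. exact: app2 C2_sub (app1 C1_W (P0 _)) (app1 C1_sndp (P0 _)). Qed.

Lemma W_cpair a b : W (cpair a b) = (a + b)%N.
Proof.
have [H0 Hlt] : Wt (W (cpair a b)) (cpair a b) = 0%N /\
  forall m, (m < W (cpair a b))%N -> Wt m (cpair a b) <> 0%N := minzP (W_ex _).
have cp : cpair a b = (tri (a + b) + b)%N by [].
case: (ltngtP (W (cpair a b)) (a + b)) => // h.
- move: H0; rewrite /Wt; have := tri_mono h; rewrite cp; lia.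
- have := Hlt _ h; rewrite /Wt triS cp; lia.
Qed.

Lemma sndp_cpair a b : sndp (cpair a b) = b.
Proof. by rewrite /sndp W_cpair /cpair -/(tri _); lia. Qed.
Lemma fstp_cpair a b : fstp (cpair a b) = a.
Proof. by rewrite /fstp sndp_cpair W_cpair; lia. Qed.

Lemma cpair_inj a b c d : cpair a b = cpair c d -> a = c /\ b = d.
Proof. by move=> E; have := congr1 fstp E; have := congr1 sndp E; rewrite !fstp_cpair !sndp_cpair. Qed.

Lemma sndp_le z : (sndp z <= z)%N.
Proof. rewrite /sndp; lia. Qed.

Definition consL a r := (cpair a r).+1.
Definition hdL L := fstp L.-1.
Definition tlL L := sndp L.-1.
Definition sfx k L := prf2 (fun L => L) (fun i r L => tlL r) k L.
Definition lenL L := minz (fun k => sfx k L).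
Definition mapL (h : nat -> nat) L :=
  prf2 (fun _ => 0%N) (fun j r L => consL (h (hdL (sfx (lenL L - j.+1) L))) r) (lenL L) L.

Lemma C2_consL : C2 consL.
Proof. exact: app1 C1_succ C2_cpair. Qed.
Lemma C1_hdL : C1 hdL.
Proof. exact: app1 C1_fstp (app1 C1_pred (P0 _)). Qed.
Lemma C1_tlL : C1 tlL.
Proof. exact: app1 C1_sndp (app1 C1_pred (P0 _)). Qed.
Lemma C2_sfx : C2 sfx.
Proof. apply: C_prec; [exact: C1_id | exact: app1 C1_tlL (P1 _)]. Qed.

Lemma sfx_le k L : (sfx k L <= L - k)%N.
Proof.
elim: k => [|k IH] /=; first by rewrite subn0.
rewrite -/(sfx k L) /tlL; have := sndp_le (sfx k L).-1; lia.
Qed.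

Lemma lenL_ex L : exists k, sfx k L = 0%N.
Proof. by exists L; have := sfx_le L L; rewrite subnn leqn0 => /eqP. Qed.

Lemma C1_lenL : C1 lenL.
Proof. exact: C_mu C2_sfx lenL_ex. Qed.

Lemma C1_mapL h : C1 h -> C1 (mapL h).
Proof.
move=> Hh; apply: app2 _ (app1 C1_lenL (P0 _)) (P0 _).
apply: C_prec; first exact: cmp_const.
rewrite /C3; cbv beta.
apply: app2 C2_consL _ (P1 _); refine (app1 Hh _); refine (app1 C1_hdL _).
refine (app2 C2_sfx _ (P2 _)).
exact: app2 C2_sub (app1 C1_lenL (P2 _)) (app1 C1_succ (P0 _)).
Qed.

Lemma enc_list_cons a l : enc_list (a :: l) = consL a (enc_list l).
Proof. by []. Qed.

Lemma tlL_cons a l : tlL (consL a l) = l.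
Proof. by rewrite /tlL /consL /= sndp_cpair. Qed.
Lemma hdL_cons a l : hdL (consL a l) = a.
Proof. by rewrite /hdL /consL /= fstp_cpair. Qed.
Lemma tlL0 : tlL 0 = 0%N.
Proof. by rewrite /tlL /sndp. Qed.

Lemma tlL_enc l : tlL (enc_list l) = enc_list (behead l).
Proof. case: l => [|a l]; [exact: tlL0 | exact: tlL_cons]. Qed.

Lemma dropS_behead (l : seq nat) k : drop k.+1 l = behead (drop k l).
Proof. elim: l k => [|a l IH] [|k] //=; by rewrite drop0. Qed.

Lemma sfx_enc k l : sfx k (enc_list l) = enc_list (drop k l).
Proof.
elim: k => [|k IH]; first by rewrite drop0.
by rewrite /sfx /= -/(sfx k _) IH tlL_enc dropS_behead.
Qed.

Lemma enc_list0 l : enc_list l = 0%N -> l = [::].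
Proof. by case: l. Qed.

Lemma lenL_enc l : lenL (enc_list l) = size l.
Proof.
have [H0 Hlt] : sfx (lenL (enc_list l)) (enc_list l) = 0%N /\
  forall m, (m < lenL (enc_list l))%N -> sfx m (enc_list l) <> 0%N := minzP (lenL_ex _).
rewrite sfx_enc in H0; move/enc_list0: H0 => /eqP; rewrite -size_eq0 size_drop subn_eq0 => H1.
apply/eqP; rewrite eqn_leq H1 andbT leqNgt; apply/negP => hl.
by apply: (Hlt _ hl); rewrite sfx_enc drop_oversize // ltnW.
Qed.

Lemma mapL_enc h l : mapL h (enc_list l) = enc_list (map h l).
Proof.
rewrite /mapL lenL_enc.
suff H : forall j, (j <= size l)%N ->
  prf2 (fun _ => 0%N) (fun j r L => consL (h (hdL (sfx (lenL L - j.+1) L))) r) j (enc_list l)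
  = enc_list (map h (drop (size l - j) l)).
  by rewrite H // subnn drop0.
elim=> [|j IH] hj /=; first by rewrite subn0 drop_oversize.
rewrite IH ?(ltnW hj) // lenL_enc sfx_enc.
rewrite (drop_nth 0%N (n := (size l - j.+1))); last by lia.
have -> : (size l - j.+1).+1 = size l - j by lia.
by rewrite enc_list_cons /= hdL_cons.
Qed.

Import Order.TTheory GRing.Theory Num.Theory.

Lemma enc_bits_inj : injective enc_bits.
Proof.
elim=> [|b s IH] [|c t] //=; try lia.
move=> E.
have := congr1 odd E; rewrite !oddD !odd_double /= => Ho.
have Hbc : b = c by move: Ho; case: (b); case: (c).
subst c; congr (_ :: _); apply: IH.
by move: E; lia.
Qed.

Lemma enc_bits_surj n : exists s, enc_bits s = n.
Proof.
elim/ltn_ind: n => [[|n]] IH; first by exists [::].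
have [s Hs] : exists s, enc_bits s = n./2 by apply: IH; lia.
exists (odd n :: s) => /=; rewrite Hs.
have := odd_double_half n; lia.
Qed.

Definition bits (n : nat) : Sigma := xget [::] (fun s => enc_bits s = n).

Lemma bitsK n : enc_bits (bits n) = n.
Proof. exact: (xgetPex [::] (P := fun s => enc_bits s = n)) (enc_bits_surj n). Qed.
Lemma encK s : bits (enc_bits s) = s.
Proof. by apply: enc_bits_inj; rewrite bitsK. Qed.

Lemma enc_list_inj : injective enc_list.
Proof.
elim=> [|a l IH] [|b m] //= [] /cpair_inj [-> /IH ->] //.
Qed.

Lemma enc_seqs_inj : injective enc_seqs.
Proof.
move=> l m /enc_list_inj; apply: inj_map; exact: enc_bits_inj.
Qed.

Local Open Scope ring_scope.

Lemma rat_test (a b qd : nat) : (0 < qd)%N ->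
  (((int_of_nat a)%:~R / (b.+1)%:R < (qd%:R)^-1 :> rat) <->
   (odd a \/ (a./2 * qd < b.+1)%N)).
Proof.
move=> hq; rewrite /int_of_nat; case: (odd a) => /=.
  split=> [_|_]; first by left.
  rewrite mulrNz -pmulrn mulNr.
  have h1 : 0 <= (uphalf a)%:R / (b.+1)%:R :> rat by rewrite divr_ge0.
  have h2 : 0 < (qd%:R)^-1 :> rat by rewrite invr_gt0 ltr0n.
  by apply: le_lt_trans h2; rewrite oppr_le0.
rewrite -pmulrn ltr_pdivrMr ?ltr0n // mulrC ltr_pdivlMr ?ltr0n // -natrM ltr_nat.
by split=> [->|[]] //; right.
Qed.

Section Key.
Variable R : realType.
Variables (UU : Sigma -> option Sigma) (cU : code).
Hypothesis hcU : forall s t, UU s = Some t <-> ev cU [:: enc_bits s] (enc_bits t).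
Variable Q : Sigma -> seq Sigma.
Hypothesis hQc : C1 (fun u => enc_seqs (Q (bits u))).
Hypothesis hQsurj : forall l, exists s, Q s = l.
Variables (X Y : Type) (d : X -> X -> R) (d' : Y -> Y -> R).
Variables (I : Sigma -> X) (IJ : Sigma -> Y) (f : X -> Y).
Hypothesis hIJ : interpretation d' IJ.
Hypothesis hd' : is_metric d'.
Variables (D : Sigma -> Sigma -> nat -> rat) (FA FB : nat -> nat -> nat -> nat).
Hypotheses (hFA : C3 FA) (hFB : C3 FB).
Hypothesis hD : forall s1 s2 n, D s1 s2 n =
  (int_of_nat (FA (enc_bits s1) (enc_bits s2) n))%:~R / ((FB (enc_bits s1) (enc_bits s2) n).+1)%:R.
Hypothesis hDb : forall s1 s2 n,
  `|d' (f (I s1)) (IJ s2) - ratr (D s1 s2 n)| <= 2%:R ^- n.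
Variable qd : nat.
Hypothesis qd_gt0 : (0 < qd)%N.

Definition Kq := (2 * qd)%N.
Definition tst n e := let a := FA e n Kq in let b := FB e n Kq in
  ((1 - odd a) * (1 - (b.+1 - a./2 * qd)))%N.

Lemma C2_tst : C2 tst.
Proof.
rewrite /C2 /tst.
refine (app2 C2_mul (app2 C2_sub (cmp_const _ _) (app1 C1_odd _)) _).
  exact: app3 hFA (P1 _) (P0 _) (cmp_const _ _).
refine (app2 C2_sub (cmp_const _ _) (app2 C2_sub (app1 C1_succ _) (app2 C2_mul (app1 C1_half _) (cmp_const _ _)))).
  exact: app3 hFB (P1 _) (P0 _) (cmp_const _ _).
exact: app3 hFA (P1 _) (P0 _) (cmp_const _ _).
Qed.

Lemma tst0 n e : tst n e = 0%N <-> ratr (D (bits e) (bits n) Kq) < (qd%:R)^-1 :> R.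
Proof.
rewrite -(ratr_nat R qd) -fmorphV ltr_rat hD !bitsK rat_test // /tst.
case: (odd _) => /=; first by split=> // _; left.
rewrite mul1n; split; [move=> H; right | case=> // ]; lia.
Qed.

Lemma d'_ge0 y z : 0 <= d' y z.
Proof.
case: hd' => H0 Hs Ht; have := Ht y z y; rewrite (Hs z y) (proj2 (H0 y y) erefl).
move=> h; lra.
Qed.

Lemma d'_sym y z : d' y z = d' z y.
Proof. by case: hd'. Qed.

Lemma d'_tri y z w : d' y w <= d' y z + d' z w.
Proof. by case: hd'. Qed.

Lemma pow2_bound : 2%:R ^- Kq <= (Kq%:R)^-1 :> R.
Proof.
rewrite lef_pV2 ?posrE ?exprn_gt0 ?ltr0n //; last by rewrite /Kq muln_gt0.
by rewrite -natrX ler_nat ltnW // ltn_expl.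
Qed.

Lemma Kq_eq : (Kq%:R)^-1 = (qd%:R)^-1 / 2 :> R.
Proof. by rewrite /Kq natrM invfM mulrC. Qed.

Lemma qd_pos : 0 < (qd%:R)^-1 :> R.
Proof. by rewrite invr_gt0 ltr0n. Qed.

Lemma tst_ex e : exists n, tst n e = 0%N.
Proof.
have hq := qd_pos.
have [s2 Hs2] := hIJ (f (I (bits e))) (e := (qd%:R)^-1 / 2) ltac:(lra).
exists (enc_bits s2); apply/tst0; rewrite encK.
have := hDb (bits e) s2 Kq; rewrite ler_norml => /andP [h1 h2].
have := pow2_bound; rewrite Kq_eq d'_sym in Hs2 *; lra.
Qed.

Definition hp e := minz (fun n => tst n e).
Lemma C1_hp : C1 hp.
Proof. exact: C_mu C2_tst tst_ex. Qed.

Definition hb s1 := bits (hp (enc_bits s1)).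

Lemma hb_spec s1 : d' (IJ (hb s1)) (f (I s1)) < 2 / qd%:R.
Proof.
have hq := qd_pos.
have [H0 _] : tst (hp (enc_bits s1)) (enc_bits s1) = 0%N /\ _ := minzP (tst_ex _).
move/tst0: H0; rewrite encK -/(hb s1) => H.
have := hDb s1 (hb s1) Kq; rewrite ler_norml => /andP [h1 h2].
have := pow2_bound; rewrite Kq_eq d'_sym; lra.
Qed.

Definition Qcf u := enc_seqs (Q (bits u)).
Definition neq a b := ((a - b) + (b - a))%N.
Lemma C2_neq : C2 neq.
Proof. exact: app2 C2_add (app2 C2_sub (P0 _) (P1 _)) (app2 C2_sub (P1 _) (P0 _)). Qed.

Definition Gt n u := neq (Qcf n) (mapL hp (Qcf u)).
Lemma Gt_ex u : exists n, Gt n u = 0%N.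
Proof.
have [s Hs] := hQsurj (map hb (Q (bits u))).
exists (enc_bits s); rewrite /Gt /Qcf encK Hs /enc_seqs mapL_enc -map_comp.
rewrite -map_comp.
suff -> : [seq (enc_bits \o hb) i | i <- Q (bits u)] = [seq (hp \o enc_bits) i | i <- Q (bits u)].
  by rewrite /neq !subnn.
by apply: eq_map => z /=; rewrite /hb bitsK.
Qed.

Definition Gp u := minz (fun n => Gt n u).
Lemma C1_Gp : C1 Gp.
Proof.
apply: C_mu Gt_ex; rewrite /C2 /Gt.
refine (app2 C2_neq (app1 hQc (P0 _)) (app1 (C1_mapL C1_hp) (app1 hQc (P1 _)))).
Qed.

Lemma Gp_spec s : Q (bits (Gp (enc_bits s))) = map hb (Q s).
Proof.
have [H0 _] : Gt (Gp (enc_bits s)) (enc_bits s) = 0%N /\ _ := minzP (Gt_ex _).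
move: H0; rewrite /Gt /neq /Qcf encK => H.
apply: enc_seqs_inj.
have -> : enc_seqs (Q (bits (Gp (enc_bits s)))) = mapL hp (enc_seqs (Q s)) by lia.
rewrite /enc_seqs mapL_enc -!map_comp; congr enc_list; apply: eq_map => z /=; by rewrite /hb bitsK.
Qed.

Definition phi p := omap (fun s => bits (Gp (enc_bits s))) (UU p).

Lemma phi_partrec : partrec phi.
Proof.
case: C1_Gp => cG HG.
exists (CComp cG [:: cU]) => s t; split.
- rewrite /phi; case E: (UU s) => [s0|] //= [<-].
  econstructor; first by constructor; [apply/hcU; exact: E | constructor].
  by rewrite bitsK; apply: (HG [:: enc_bits s0]).
- move=> H; inversion H; subst.
  match goal with Hs : evs _ _ _ |- _ => inversion Hs; subst end.
  match goal with Hs : evs [::] _ _ |- _ => inversion Hs; subst end.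
  match goal with Hu : ev cU _ ?w |- _ =>
    rewrite -(bitsK w) in Hu; move/hcU: Hu => Hw; rewrite /phi Hw /= bitsK end.
  match goal with Hg : ev cG [:: ?w] _ |- _ => have := ev_det _ _ _ Hg _ (HG [:: w] erefl) end.
  by rewrite /ar /= => E; rewrite -E encK.
Qed.

Lemma iter_comm (T : X -> X) (T' : Y -> Y) (hc : forall z, f (T z) = T' (f z)) i z :
  f (iter i T z) = iter i T' (f z).
Proof. by elim: i => //= i <-; rewrite hc. Qed.

Lemma transfer (T : X -> X) (T' : Y -> Y) (hc : forall z, f (T z) = T' (f z))
  x k (delta eps' : R) p p' :
  (forall u v, d u v < delta -> d' (f u) (f v) + 2 / qd%:R < eps') ->
  orbit_prog d UU Q I T x k delta p -> UU p' = phi p ->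
  orbit_prog d' UU Q IJ T' (f x) k eps' p'.
Proof.
move=> hdel [s [Hs [Hsz Hd]]]; rewrite /phi Hs /= => Hp'.
exists (bits (Gp (enc_bits s))); split=> //; rewrite Gp_spec size_map; split=> // i hi.
rewrite (nth_map [::]) ?Hsz // -(iter_comm hc).
have := hb_spec (nth [::] (Q s) i); have := hdel _ _ (Hd i hi).
have := d'_tri (IJ (hb (nth [::] (Q s) i))) (f (I (nth [::] (Q s) i))) (f (iter i T x)).
lra.
Qed.
End Key.

Section Hy.
Variables (R : realType) (Rs : realFieldType) (J : (nat -> R) -> Rs).
Hypothesis hJ : hyperreal J.

Lemma J_add phi psi : J (fun n => phi n + psi n) = J phi + J psi.
Proof. by case: hJ. Qed.
Lemma J_mul phi psi : J (fun n => phi n * psi n) = J phi * J psi.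
Proof. by case: hJ. Qed.
Lemma J_one : J (fun _ => 1) = 1.
Proof. by case: hJ. Qed.
Lemma J_prop (a : R) phi : (exists k, (1 <= k)%N /\ forall n, (1 <= n)%N -> a <= phi (k * n)%N) ->
  J (fun _ => a) <= J phi.
Proof. by case: hJ => _ _ _ _; apply. Qed.

Lemma J0 : J (fun _ => 0) = 0.
Proof.
have := J_add (fun _ => 0) (fun _ => 0).
have -> : (fun _ : nat => 0 + 0 : R) = (fun _ => 0) by apply: funext => ?; rewrite addr0.
move=> h; have : J (fun _ => 0) + 0 = J (fun _ => 0) + J (fun _ => 0) by rewrite addr0 {1}h.
by move/addrI.
Qed.

Lemma Jnat n : J (fun _ => n%:R) = n%:R.
Proof.
elim: n => [|n IH]; first exact: J0.
have -> : (fun _ : nat => n.+1%:R : R) = (fun k => (fun _ => n%:R) k + (fun _ => 1) k).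
  by apply: funext => ?; rewrite /= -natr1.
by rewrite J_add IH J_one -natr1.
Qed.

Lemma J_le phi psi : (forall k, phi k <= psi k) -> J phi <= J psi.
Proof.
move=> H.
have E : psi = (fun k => (fun k => psi k - phi k) k + phi k) by apply: funext => k /=; rewrite subrK.
rewrite E J_add lerDr -J0; apply: J_prop; exists 1%N; split=> // n _.
by rewrite subr_ge0.
Qed.

Lemma J_ge1 (c : nat -> nat) : (forall k1 k2, c k1 = 0%N -> c k2 = 0%N -> k1 = k2) ->
  1 <= J (fun k => (c k)%:R).
Proof.
move=> H; rewrite -J_one; apply: J_prop.
case: (pselect (exists k0, c k0 = 0%N)) => [[k0 Hk0]|Hn].
- exists k0.+1; split=> // n hn; rewrite ler1n lt0n; apply/negP => /eqP h.
  have := H _ _ h Hk0; nia.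
- exists 1%N; split=> // n _; rewrite ler1n lt0n; apply/negP => /eqP h.
  by apply: Hn; exists (1 * n)%N.
Qed.

Lemma J_bound (a b : nat -> nat) (c : nat) : (forall k, b k <= c * a k + c)%N ->
  J (fun k => (b k)%:R) <= c%:R * J (fun k => (a k)%:R) + c%:R.
Proof.
move=> H; rewrite -!Jnat -J_mul -J_add; apply: J_le => k.
by rewrite -natrM -natrD ler_nat.
Qed.

Lemma cls_contra (a b : Rs) (K : nat) : (0 < K)%N -> 1 <= a -> 1 <= b ->
  b <= K%:R * a -> ~ cls_lt J a b.
Proof.
move=> hK ha hb hba [Hle Hnsim].
have hK' : 1 <= K%:R :> Rs by rewrite ler1n.
have a0 : 0 < a by lra.
have b0 : 0 < b by lra.
set x := K%:R * a.
have x0 : 0 < x by rewrite /x; apply: mulr_gt0 => //; lra.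
have hxa : hsim J x a.
  split; [by rewrite gt_eqF | by rewrite gt_eqF | |].
  - exists K%:R; rewrite Jnat /x mulfK ?gt_eqF // ger0_norm //; lra.
  - exists 1; rewrite J_one /x invfM mulrCA mulfV ?gt_eqF // mulr1 ger0_norm.
      by rewrite invf_le1 //; lra.
    by rewrite invr_ge0; lra.
have hbb : hsim J b b.
  by split; [rewrite gt_eqF | rewrite gt_eqF | exists 1 | exists 1];
     rewrite // J_one divff ?gt_eqF // normr1.
case: (Hle x b hxa hbb) => [[_ _ [r1 Hr1] [r2 Hr2]]|]; last by rewrite ltNge hba.
apply: Hnsim; split; [by rewrite gt_eqF | by rewrite gt_eqF | exists r1 | exists (K%:R * r2)].
- apply: le_trans Hr1; rewrite !ger0_norm ?divr_ge0 //; try lra.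
  by rewrite ler_pM2r ?invr_gt0 // /x; nra.
- rewrite J_mul Jnat.
  have -> : b / a = K%:R * (b / x).
    have hK0 : K%:R != 0 :> Rs by rewrite gt_eqF //; lra.
    have ha0 : a != 0 by rewrite gt_eqF.
    by rewrite /x; field; rewrite hK0 ha0.
  rewrite normrM ger0_norm; last lra.
  by rewrite ler_pM2l //; lra.
Qed.
End Hy.

Lemma ex_min_prop (P : nat -> Prop) : (exists n, P n) ->
  exists n, P n /\ forall m, P m -> (n <= m)%N.
Proof.
move=> [n Hn]; have ex : exists n, `[< P n >] by exists n; apply/asboolP.
exists (ex_minn ex); case: ex_minnP => m /asboolP Hm Hmin; split=> // k hk.
by apply: Hmin; apply/asboolP.
Qed.

Section Orb.
Variables (R : realType) (X : Type) (d : X -> X -> R) (UU : Sigma -> option Sigma)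
  (Q : Sigma -> seq Sigma) (I : Sigma -> X) (T : X -> X) (x : X).

Lemma orbit_cx_spec n eps : (exists p, orbit_prog d UU Q I T x n eps p) ->
  (exists p, orbit_prog d UU Q I T x n eps p /\ size p = orbit_cx d UU Q I T x n eps) /\
  forall p, orbit_prog d UU Q I T x n eps p -> (orbit_cx d UU Q I T x n eps <= size p)%N.
Proof.
move=> [p Hp].
have [m [[q [Hq Hqm]] Hmin]] := ex_min_prop (P := fun m => exists p, orbit_prog d UU Q I T x n eps p /\ size p = m)
  (ex_intro _ (size p) (ex_intro _ p (conj Hp erefl))).
apply: (xgetPex 0%N (P := fun m => (exists p, orbit_prog d UU Q I T x n eps p /\ size p = m) /\
    forall p, orbit_prog d UU Q I T x n eps p -> (m <= size p)%N)).
exists m; split; first by exists q.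
by move=> p' Hp'; apply: Hmin; exists p'.
Qed.

Lemma orbit_cx_zero n1 n2 e1 e2 :
  (exists p, orbit_prog d UU Q I T x n1 e1 p) -> (exists p, orbit_prog d UU Q I T x n2 e2 p) ->
  orbit_cx d UU Q I T x n1 e1 = 0%N -> orbit_cx d UU Q I T x n2 e2 = 0%N -> n1 = n2.
Proof.
move=> /orbit_cx_spec [[p1 [[s1 [H1 [S1 _]]] Z1]] _] /orbit_cx_spec [[p2 [[s2 [H2 [S2 _]]] Z2]] _] E1 E2.
move: Z1 Z2; rewrite E1 E2 => /size0nil Z1 /size0nil Z2; subst.
by move: H1; rewrite H2 => -[E]; subst; move: S1; rewrite S2 => -[].
Qed.

Lemma const_partrec s0 : partrec (fun _ : Sigma => Some s0).
Proof.
have [c Hc] := cmp_const 1 (enc_bits s0).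
exists c => s t; split.
  by move=> [<-]; apply: (Hc [:: enc_bits s]).
move=> H; have := ev_det _ _ _ H _ (Hc [:: enc_bits s] erefl).
by move/enc_bits_inj => ->.
Qed.

Lemma orbit_prog_ex (hUU : universal_machine UU) (hQsurj : forall l, exists s, Q s = l)
  (hI : interpretation d I) n eps : 0 < eps -> exists p, orbit_prog d UU Q I T x n eps p.
Proof.
move=> he.
have [g Hg] := choice (fun i => hI (iter i T x) eps he).
have [s Hs] := hQsurj (mkseq g n.+1).
have [c Hc] := hUU.2 _ (const_partrec s).
have [p' [Hp' _]] := Hc [::] s erefl.
exists p', s; split=> //; rewrite Hs size_mkseq; split=> // i hi.
by rewrite nth_mkseq.
Qed.
End Orb.

Lemma totrec3_C (D : Sigma -> Sigma -> nat -> rat) : totrec3 D ->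
  exists FA FB, [/\ C3 FA, C3 FB & forall s1 s2 n, D s1 s2 n =
  (int_of_nat (FA (enc_bits s1) (enc_bits s2) n))%:~R /
  ((FB (enc_bits s1) (enc_bits s2) n).+1)%:R].
Proof.
move=> [cn [cd H]].
pose FA x y z := xget 0%N (fun a => ev cn [:: x; y; z] a).
pose FB x y z := xget 0%N (fun b => ev cd [:: x; y; z] b).
have HA x y z : ev cn [:: x; y; z] (FA x y z).
  apply: (xgetPex 0%N (P := fun a => ev cn [:: x; y; z] a)).
  have [a [b [Ha [Hb _]]]] := H (bits x) (bits y) z; rewrite !bitsK in Ha; by exists a.
have HB x y z : ev cd [:: x; y; z] (FB x y z).
  apply: (xgetPex 0%N (P := fun b => ev cd [:: x; y; z] b)).
  have [a [b [Ha [Hb _]]]] := H (bits x) (bits y) z; rewrite !bitsK in Hb; by exists b.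
exists FA, FB; split.
- by exists cn => [[|? [|? [|? [|]]]]] //= _; apply: HA.
- by exists cd => [[|? [|? [|? [|]]]]] //= _; apply: HB.
- move=> s1 s2 n; have [a [b [Ha [Hb ->]]]] := H s1 s2 n.
  by rewrite (ev_det _ _ _ Ha _ (HA _ _ _)) (ev_det _ _ _ Hb _ (HB _ _ _)).
Qed.

Lemma totrec_seqs_C (Q : Sigma -> seq Sigma) : totrec_seqs Q ->
  C1 (fun u => enc_seqs (Q (bits u))).
Proof.
move=> [c H]; exists c => [[|u [|]]] //= _.
by have := H (bits u); rewrite bitsK.
Qed.

Unset Implicit Arguments.
Theorem mainTheorem8
  (R : realType)
  (UU : Sigma -> option Sigma) (hUU : universal_machine UU)
  (Q : Sigma -> seq Sigma) (hQrec : totrec_seqs Q) (hQsurj : forall l, exists s, Q s = l)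
  (Rs : realFieldType) (J : (nat -> R) -> Rs) (hJ : hyperreal J)
  (X Y : Type) (d : X -> X -> R) (d' : Y -> Y -> R)
  (hd : is_metric d) (hd' : is_metric d') (hsX : separable d) (hsY : separable d')
  (CI : (Sigma -> X) -> Prop) (CJ : (Sigma -> Y) -> Prop)
  (hCI : comp_structure d CI) (hCJ : comp_structure d' CJ)
  (T : X -> X) (T' : Y -> Y)
  (hT : metric_continuous d T) (hT' : metric_continuous d' T')
  (f : X -> Y) (hfsurj : forall y, exists x, f x = y)
  (hfmor : morphism d d' CI CJ f)
  (hfcomm : forall x, f (T x) = T' (f x)) :
  forall (x : X) (I : Sigma -> X) (IJ : Sigma -> Y),
    CI I -> CJ IJ ->
    rseq_ge J (orbit_cx_seq J d UU Q I T x) (orbit_cx_seq J d' UU Q IJ T' (f x)).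
Proof.
move=> x I IJ HI HJ.
have hUU' := hUU; case: hUU' => [[cU hcU] huniv].
have hQc := totrec_seqs_C hQrec.
case: hfmor => hunif hmor.
have [D [hDrec hDb]] := hmor I IJ HI HJ.
have [FA [FB [hFA hFB hD]]] := totrec3_C hDrec.
have hIJ : interpretation d' IJ by case: hCJ => _ hci _ _; case: (hci IJ HJ).
have hI : interpretation d I by case: hCI => _ hci _ _; case: (hci I HI).
rewrite /rseq_ge; case: (pselect (rseq_lt J (orbit_cx_seq J d' UU Q IJ T' (f x))
   (orbit_cx_seq J d UU Q I T x))) => [h|h]; [by left | right; split=> //].
move=> [M HM].
pose m := M.+1.
pose eps' : R := (m.+1%:R)^-1.
have he' : 0 < eps' by rewrite invr_gt0 ltr0n.
pose qd := (4 * m.+1)%N.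
have qd_gt0 : (0 < qd)%N by rewrite /qd muln_gt0.
have Eq : 2 / qd%:R = eps' / 2 :> R.
  rewrite /eps' /qd natrM.
  have h0 : (m.+1)%:R != 0 :> R by rewrite pnatr_eq0.
  by field; rewrite h0.
have [delta hdel0 Hdel] := hunif (eps' / 2) ltac:(lra).
have hdi : 0 <= delta^-1 by rewrite invr_ge0 ltW.
pose n := maxn M.+1 (Num.Def.archi_bound delta^-1).
have hn : (n.+1%:R)^-1 < delta.
  rewrite -[X in _ < X]invrK ltf_pV2 ?posrE ?invr_gt0 ?ltr0n //.
  apply: lt_le_trans (archi_boundP hdi) _; rewrite ler_nat /n; lia.
pose dl : R := (n.+1%:R)^-1.
have hdl : 0 < dl by rewrite invr_gt0 ltr0n.
have Hdel' : forall u v, d u v < dl -> d' (f u) (f v) + 2 / qd%:R < eps'.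
  move=> u v huv; have := Hdel u v (lt_trans huv hn); rewrite Eq; lra.
have Hpr := phi_partrec hcU hQc hQsurj hIJ hd' hFA hFB hD hDb qd_gt0.
have [c Hc] := huniv _ Hpr.
have Hexx : forall k e, 0 < e -> exists p, orbit_prog d UU Q I T x k e p.
  by move=> k e he; apply: orbit_prog_ex.
have Hexy : forall k e, 0 < e -> exists p, orbit_prog d' UU Q IJ T' (f x) k e p.
  by move=> k e he; apply: orbit_prog_ex.
have Hbound : forall k, (orbit_cx d' UU Q IJ T' (f x) k eps' <=
    c * orbit_cx d UU Q I T x k dl + c)%N.
  move=> k.
  have [[p [Hp Hsz]] _] := orbit_cx_spec (Hexx k dl hdl).
  have Hp' := Hp; case: Hp' => s [Hs _].
  have [p' [Hp'1 Hp'2]] := Hc p (bits (Gp Q FA FB qd (enc_bits s))) ltac:(by rewrite /phi Hs).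
  have Ep : UU p' = phi UU Q FA FB qd p by rewrite Hp'1 /phi Hs.
  have Hy := transfer hQsurj hIJ hd' hD hDb qd_gt0 hfcomm Hdel' Hp Ep.
  have [_ Hmin] := orbit_cx_spec (Hexy k eps' he').
  by apply: leq_trans (Hmin _ Hy) _; rewrite -Hsz.
have HA : 1 <= orbit_cx_seq J d UU Q I T x n.
  apply: (J_ge1 hJ) => k1 k2; apply: orbit_cx_zero; exact: Hexx.
have HB : 1 <= orbit_cx_seq J d' UU Q IJ T' (f x) m.
  apply: (J_ge1 hJ) => k1 k2; apply: orbit_cx_zero; exact: Hexy.
have HBA := J_bound hJ Hbound.
apply: (cls_contra hJ (K := (c + c).+1) _ HA HB _ (HM n m _ _)).
all: try (rewrite /n /m; lia).
apply: le_trans HBA _.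
move: HA; rewrite /orbit_cx_seq /orbit_cx_eps -/eps' -/dl.
set a := J _ => Ha.
have hc0 : 0 <= c%:R :> Rs by rewrite ler0n.
rewrite -addn1 !natrD; nra.
Qed.
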